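(* Let the user types be drawn from a distribution $\mathcal D_U$ and the creator types from a distribution $\mathcal D_C$ (arbitrary distributions on non-negative unit vectors of $\mathbb R^D$), and let $\epsilon:=\Pr(\mathrm{LTE}(\mathbf{FL})=0)$. For any values of $U,C,K,D,\bar e,\bar a$ with $C\ge K$, $U\ge\bar a$ and $\epsilon<1$, $$\mathbb E\left[\frac{\mathrm{LTE}(\mathbf{UC})}{\mathrm{LTE}(\mathbf{FL})}\,\middle|\,\mathrm{LTE}(\mathbf{FL})>0\right]\le\frac{1}{1-\epsilon}\Pr\left(\text{at least }K\text{ creators stay after }t=0\text{ under }UC_0\right),$$ where ''at least $K$ creators stay after $t=0$ under $UC_0$'' means $|\mathcal C_1|\ge K$ when the user-centric recommendation $UC_0$ is used at $t=0$.
   Context: An instance consists of a dimension $D$, users $\mathcal U_0=\{1,\dots,U\}$ with types $u_i\in\mathbb R^D_{\ge0}$, creators $\mathcal C_0=\{1,\dots,C\}$ with types $c_j\in\mathbb R^D_{\ge 0}$, all of Euclidean norm $1$, a positive integer $K$, a creator threshold $\bar a\in\mathbb N_0$ and a user threshold $\bar e\in[0,1]$. At time $t=0,1,\dots$ the platform has sets $\mathcal U_t,\mathcal C_t$ and chooses $R_t$ assigning each $i\in\mathcal U_t$ a set $R_t(i)\subseteq\mathcal C_t$ of size $K$ (smaller only if necessary). Engagement $E(\mathcal U,\mathcal C,R)=\sum_{i\in\mathcal U}\sum_{j\in R(i)}u_i^Tc_j$. Then $\mathcal U_{t+1}=\{i\in\mathcal U_t:|R_t(i)|=K,\ u_i^Tc_j\ge\bar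 e\ \forall j\in R_t(i)\}$, $\mathcal C_{t+1}=\{j\in\mathcal C_t:|\{i\in\mathcal U_t:j\in R_t(i)\}|\ge\bar a\}$. $\mathrm{LTE}(\mathbf R)=\lim_{T\to\infty}\frac1T\sum_{t<T}E(\mathcal U_t,\mathcal C_t,R_t)$. $\mathbf{FL}$ is any sequence maximizing $\mathrm{LTE}$; $\mathbf{UC}$ is the sequence with $UC_t(i)\in\arg\max_{S\subseteq\mathcal C_t,|S|\le K}\sum_{j\in S}u_i^Tc_j$. *)

(* Defs.v *)
From mathcomp Require Import all_boot all_order all_algebra.
From mathcomp Require Import all_classical all_reals all_analysis.

Set Implicit Arguments.
Unset Strict Implicit.
Unset Printing Implicit Defensive.

Import Order.TTheory GRing.Theory Num.Theory.
Import numFieldNormedType.Exports.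
Local Open Scope ring_scope.
Local Open Scope classical_set_scope.

Definition dotp {R : realType} {D : nat} (u c : D.-tuple R) : R :=
  \sum_(k < D) tnth u k * tnth c k.

Definition nonneg_unit {R : realType} {D : nat} : set (D.-tuple R) :=
  [set v | (forall k : 'I_D, 0 <= tnth v k) /\ \sum_(k < D) tnth v k ^+ 2 = 1].

Definition recom (U C : nat) := 'I_U -> {set 'I_C}.
Definition state (U C : nat) := ({set 'I_U} * {set 'I_C})%type.

Definition init_state (U C : nat) : state U C := ([set: 'I_U]%SET, [set: 'I_C]%SET).

Definition valid_recom (U C K : nat) (s : state U C) (r : recom U C) : Prop :=
  forall i, i \in s.1 -> r i \subset s.2 /\ #|r i| = minn K #|s.2|.

Section Dyn.
Variables (R : realType) (D U C K abar : nat) (ebar : R).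
Variables (ut : 'I_U -> D.-tuple R) (ct : 'I_C -> D.-tuple R).

Definition engagement (s : state U C) (r : recom U C) : R :=
  \sum_(i in s.1) \sum_(j in r i) dotp (ut i) (ct j).

Definition step (s : state U C) (r : recom U C) : state U C :=
  ([set i in s.1 | (#|r i| == K) && [forall j in r i, ebar <= dotp (ut i) (ct j)]],
   [set j in s.2 | (abar <= #|[set i in s.1 | j \in r i]|)%N]).

Fixpoint traj (rs : nat -> recom U C) (t : nat) : state U C :=
  match t with
  | 0 => init_state U C
  | t'.+1 => step (traj rs t') (rs t')
  end.

Definition valid_seq (rs : nat -> recom U C) : Prop :=
  forall t, valid_recom K (traj rs t) (rs t).

Definition avg_eng (rs : nat -> recom U C) (T : nat) : R :=
  T%:R^-1 * \sum_(t < T) engagement (traj rs t) (rs t).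

Definition LTE (rs : nat -> recom U C) : R := limn (avg_eng rs).

Definition achievable_LTE : set R :=
  [set l | exists rs, valid_seq rs /\ avg_eng rs @ \oo --> l].

Definition LTE_FL : R := sup achievable_LTE.

Definition uc_opt (s : state U C) (i : 'I_U) (S : {set 'I_C}) : bool :=
  [&& S \subset s.2, #|S| == minn K #|s.2| &
      [forall S' : {set 'I_C}, (S' \subset s.2) && (#|S'| <= K)%N ==>
         (\sum_(j in S') dotp (ut i) (ct j) <= \sum_(j in S) dotp (ut i) (ct j))]].

Definition uc_recom (s : state U C) : recom U C :=
  fun i => odflt (finset.set0 : {set 'I_C}) [pick S | uc_opt s i S].

Fixpoint uc_state (t : nat) : state U C :=
  match t with
  | 0 => init_state U C
  | t'.+1 => step (uc_state t') (uc_recom (uc_state t'))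
  end.

Definition UC_seq : nat -> recom U C := fun t => uc_recom (uc_state t).

Definition LTE_UC : R := LTE UC_seq.

Definition K_creators_stay : Prop :=
  (K <= #|(step (init_state U C) (uc_recom (init_state U C))).2|)%N.

End Dyn.

Definition mutually_independent {d dV : measure_display}
  {Omega : measurableType d} {V : measurableType dV} {R : realType}
  (P : probability Omega R) {I : finType} (X : I -> Omega -> V) : Prop :=
  forall (J : {set I}) (A : I -> set V),
    (forall k, measurable (A k)) ->
    P (\big[setI/setT]_(k in J) (X k @^-1` A k)) =
    (\prod_(k in J) P (X k @^-1` A k))%E.

Definition cond_expectation {d : measure_display} {Omega : measurableType d}
  {R : realType} (P : probability Omega R) (X : Omega -> R) (A : set Omega)
  : \bar R :=
  ('E_P[fun w => (X w * \1_A w)%R] * ((fine (P A))^-1)%:E)%E.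

(* Main.v *)
Require Import Defs.
From mathcomp Require Import all_boot all_order all_algebra.
From mathcomp Require Import all_classical all_reals all_analysis.
From mathcomp Require Import ring lra zify.
From mathcomp Require Import measurable_realfun.
Import Order.TTheory GRing.Theory Num.Theory.
Import numFieldNormedType.Exports.
Local Open Scope ring_scope.
Local Open Scope classical_set_scope.
Lemma noninc_le (f : nat -> nat) : (forall t, f t.+1 <= f t)%N ->
  forall t t', (t <= t')%N -> (f t' <= f t)%N.
Proof.
move=> hf t t'; elim: t' => [|t' IH]; first by rewrite leqn0 => /eqP ->.
rewrite leq_eqVlt => /orP [/eqP <- //|]; rewrite ltnS => /IH.
exact: leq_trans (hf t').
Qed.

Lemma noninc_stab (f : nat -> nat) : (forall t, f t.+1 <= f t)%N ->
  exists t0, forall t, (t0 <= t)%N -> f t = f t0.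
Proof.
move=> hf.
have ex : exists n, `[< exists t, f t = n >] by exists (f 0); apply/asboolP; exists 0%N.
case: (ex_minnP ex) => m /asboolP [t0 ht0] hmin.
exists t0 => t ht; apply/eqP; rewrite eqn_leq noninc_le // ht0.
by apply: hmin; apply/asboolP; exists t.
Qed.

Section Cesaro.
Variable R : realType.

Definition avg (u : nat -> R) (T : nat) : R := T%:R^-1 * \sum_(t < T) u t.

Lemma inv_nat_cvg0 : (fun T : nat => (T%:R : R)^-1) @ \oo --> (0 : R).
Proof.
rewrite -cvg_shiftS /=.
have -> : (fun n : nat => (n.+1%:R : R)^-1) = harmonic by [].
exact: cvg_harmonic.
Qed.

Lemma cesaro_const (u : nat -> R) t0 c :
  (forall t, (t0 <= t)%N -> u t = c) -> avg u @ \oo --> c.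
Proof.
move=> hu.
pose K0 := \sum_(t < t0) (u t - c).
have E : {near \oo, (fun T => c + K0 * (T%:R^-1)) =1 avg u}.
  near=> T.
  have hT : (t0 < T)%N by near: T; exists t0.+1.
  rewrite /avg -(big_mkord xpredT u) (big_cat_nat (leq0n t0) (ltnW hT)) /=.
  have H2 : \sum_(t0 <= i < T) u i = \sum_(t0 <= i < T) c.
    by apply: eq_big_nat => i /andP [hi _]; apply: hu.
  rewrite H2.
  rewrite sumr_const_nat /K0 sumrB big_mkord sumr_const card_ord.
  have hTpos : (T%:R : R) != 0 by rewrite pnatr_eq0 -lt0n (leq_ltn_trans (leq0n _) hT).
  rewrite -[c *+ t0]mulr_natr -[c *+ (T - t0)]mulr_natr natrB ?(ltnW hT) //.
  by field.
suff H : (fun T : nat => c + K0 * (T%:R^-1)) @ \oo --> c.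
  by apply: cvg_trans (near_eq_cvg E) H.
have H1 : (fun T : nat => K0 * (T%:R^-1)) @ \oo --> K0 * 0.
  by apply: cvgMl_tmp; exact: inv_nat_cvg0.
have := cvgD (cvg_cst c) H1; rewrite mulr0 addr0; exact.
Unshelve. all: end_near.
Qed.

Lemma cesaro_le (u : nat -> R) t0 x l :
  (forall t, (t0 <= t)%N -> u t <= x) -> avg u @ \oo --> l -> l <= x.
Proof.
move=> hu hl.
pose v t := if (t < t0)%N then u t else x.
have hv : avg v @ \oo --> x by apply: (@cesaro_const v t0) => t; rewrite /v ltnNge => ->.
have hle : lim (avg u @ \oo) <= lim (avg v @ \oo).
  apply: ler_lim.
  - by apply/cvg_ex; exists l.
  - by apply/cvg_ex; exists x.
  near=> T; rewrite /avg ler_wpM2l ?invr_ge0 ?ler0n //.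
apply: ler_sum => t _; rewrite /v; case: ifP => // /negbT; rewrite -leqNgt.
  exact: hu.
by move: hle; rewrite (cvg_lim _ hl) // (cvg_lim _ hv).
Unshelve. all: end_near.
Qed.

End Cesaro.

Lemma sum_in_le (R : realType) (T : finType) (A : {set T}) (F : T -> R) :
  (forall x, 0 <= F x) -> \sum_(x in A) F x <= \sum_x F x.
Proof.
move=> h; rewrite big_mkcond /=; apply: ler_sum => x _.
by case: ifP.
Qed.

Lemma sum_sub_le (R : realType) (T : finType) (A B : {set T}) (F : T -> R) :
  (forall x, 0 <= F x) -> A \subset B -> \sum_(x in A) F x <= \sum_(x in B) F x.
Proof.
move=> h hAB; rewrite [X in _ <= X]big_mkcond [X in X <= _]big_mkcond /=.
apply: ler_sum => x _; case: ifP => hx; last by case: ifP.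
by rewrite (fintype.subsetP hAB x hx).
Qed.

Definition rsq (U C : nat) (q : seq {ffun 'I_U -> {set 'I_C}} * {ffun 'I_U -> {set 'I_C}})
  : nat -> recom U C := fun t i => nth q.2 q.1 t i.
Arguments rsq {U C} q t _.

Section Det.
Variables (R : realType) (D U C K abar : nat) (ebar : R).
Variables (ut : 'I_U -> D.-tuple R) (ct : 'I_C -> D.-tuple R).

Local Notation traj := (traj K abar ebar ut ct).
Local Notation step := (step K abar ebar ut ct).
Local Notation eng := (engagement ut ct).
Local Notation valid_seq := (valid_seq K abar ebar ut ct).
Local Notation avg_eng := (avg_eng K abar ebar ut ct).
Local Notation LTE := (LTE K abar ebar ut ct).
Local Notation ach := (achievable_LTE K abar ebar ut ct).
Local Notation rsq := (@rsq U C).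

Lemma step_sub s r : ((step s r).1 \subset s.1) && ((step s r).2 \subset s.2).
Proof.
by apply/andP; split; apply/fintype.subsetP => x; rewrite /= inE => /andP [].
Qed.

Lemma traj_mono rs t t' : (t <= t')%N ->
  ((traj rs t').1 \subset (traj rs t).1) && ((traj rs t').2 \subset (traj rs t).2).
Proof.
elim: t' => [|t' IH]; first by rewrite leqn0 => /eqP ->; rewrite !subxx.
rewrite leq_eqVlt => /orP [/eqP <-|]; first by rewrite !subxx.
rewrite ltnS => /IH /andP [h1 h2].
have /andP [h3 h4] := step_sub (traj rs t') (rs t').
by rewrite /= (fintype.subset_trans h3 h1) (fintype.subset_trans h4 h2).
Qed.

Lemma traj_stab rs : exists t0, forall t, (t0 <= t)%N -> traj rs t = traj rs t0.
Proof.
pose f t := (#|(traj rs t).1| + #|(traj rs t).2|)%N.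
have hf : forall t, (f t.+1 <= f t)%N.
  move=> t; have /andP [h1 h2] := step_sub (traj rs t) (rs t).
  by rewrite /f /= leq_add // subset_leq_card.
have [t0 ht0] := @noninc_stab f hf.
exists t0 => t ht.
have /andP [h1 h2] := @traj_mono rs t0 t ht.
have c1 := subset_leq_card h1; have c2 := subset_leq_card h2.
have := ht0 t ht; rewrite /f => e.
have e1 : (#|(traj rs t0).1| <= #|(traj rs t).1|)%N by lia.
have e2 : (#|(traj rs t0).2| <= #|(traj rs t).2|)%N by lia.
have /eqP q1 : (traj rs t).1 == (traj rs t0).1 by rewrite eqEcard h1 e1.
have /eqP q2 : (traj rs t).2 == (traj rs t0).2 by rewrite eqEcard h2 e2.
by rewrite [traj rs t]surjective_pairing q1 q2 -surjective_pairing.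
Qed.

Lemma eng_const_LTE rs t1 c :
  (forall t, (t1 <= t)%N -> eng (traj rs t) (rs t) = c) ->
  avg_eng rs @ \oo --> c /\ LTE rs = c.
Proof.
move=> h.
have hc : avg_eng rs @ \oo --> c.
  exact: (@cesaro_const R (fun t => eng (traj rs t) (rs t)) t1 c h).
by split => //; rewrite /Defs.LTE (cvg_lim _ hc).
Qed.

Lemma ev_const_eng rs m r : (forall t, (m <= t)%N -> rs t = r) ->
  exists t1, forall t, (t1 <= t)%N -> eng (traj rs t) (rs t) = eng (traj rs t1) (rs t1).
Proof.
move=> h; have [t0 ht0] := traj_stab rs.
exists (maxn m t0) => t ht.
have hm : (m <= t)%N := leq_trans (leq_maxl m t0) ht.
have h0 : (t0 <= t)%N := leq_trans (leq_maxr m t0) ht.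
rewrite (h t hm) (h _ (leq_maxl m t0)) (ht0 t h0) (ht0 _ (leq_maxr m t0)) //.
Qed.

Definition Bnd : R := \sum_i \sum_j `|dotp (ut i) (ct j)|.

Lemma eng_le_B s r : eng s r <= Bnd.
Proof.
rewrite /engagement /Bnd.
apply: (@le_trans _ _ (\sum_(i in s.1) \sum_j `|dotp (ut i) (ct j)|)).
  apply: ler_sum => i _; apply: (@le_trans _ _ (\sum_(j in r i) `|dotp (ut i) (ct j)|)).
    by apply: ler_sum => j _; exact: ler_norm.
  by apply: sum_in_le => j.
by apply: sum_in_le => i; apply: sumr_ge0 => j _.
Qed.

Lemma ach_le_B v : ach v -> v <= Bnd.
Proof.
move=> [rs [_ hv]].
exact: (@cesaro_le R (fun t => eng (traj rs t) (rs t)) 0 Bnd v (fun t _ => eng_le_B _ _) hv).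
Qed.

Lemma rsq_ev q t : (size q.1 <= t)%N -> rsq q t = (fun i => q.2 i).
Proof. by move=> h; rewrite /rsq nth_default. Qed.

Lemma rsq_LTE q : exists t1, avg_eng (rsq q) @ \oo --> eng (traj (rsq q) t1) (rsq q t1)
  /\ LTE (rsq q) = eng (traj (rsq q) t1) (rsq q t1).
Proof.
have [t1 h] := @ev_const_eng (rsq q) (size q.1) (fun i => q.2 i) (@rsq_ev q).
by exists t1; apply: eng_const_LTE h.
Qed.

Lemma ach_of_q q : valid_seq (rsq q) -> ach (LTE (rsq q)).
Proof.
move=> hv; have [t1 [h1 h2]] := rsq_LTE q.
by exists (rsq q); split => //; rewrite h2.
Qed.

Lemma q_of_rs rs t : traj rs t.+1 = traj rs t ->
  let q := (mkseq (fun k => finfun (rs k)) t, finfun (rs t)) in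
  (forall k, rsq q k = rs (minn k t)) /\ (forall k, traj (rsq q) k = traj rs (minn k t)).
Proof.
move=> hst q.
have h1 : forall k, rsq q k = rs (minn k t).
  move=> k; rewrite /rsq /q /=; apply: funext => i.
  case: (ltnP k t) => hk.
    by rewrite nth_mkseq // ffunE.
  rewrite (@nth_default _ _ _ k); last by rewrite size_mkseq.
  by rewrite ffunE.
split => // k; elim: k => [|k IH]; first by rewrite min0n.
rewrite /= IH h1.
case: (ltnP k t) => hk.
  by rewrite (minn_idPl hk).
by rewrite (minn_idPr (leqW hk)); exact: hst.
Qed.

Lemma q_of_rs_valid rs t : valid_seq rs -> traj rs t.+1 = traj rs t ->
  let q := (mkseq (fun k => finfun (rs k)) t, finfun (rs t)) in
  valid_seq (rsq q) /\ LTE (rsq q) = eng (traj rs t) (rs t).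
Proof.
move=> hv hst q; have [h1 h2] := @q_of_rs rs t hst.
split.
  by move=> k; rewrite h1 h2; apply: hv.
have := @eng_const_LTE (rsq q) t (eng (traj rs t) (rs t)).
case => //.
by move=> k hk; rewrite h1 h2 (minn_idPr hk).
Qed.

Lemma ach_char c : (exists v, ach v /\ c < v) <->
  (exists q, valid_seq (rsq q) /\ c < LTE (rsq q)).
Proof.
split; last first.
  by move=> [q [hv hc]]; exists (LTE (rsq q)); split => //; apply: ach_of_q.
move=> [v [[rs [hv hcv]] hc]].
have [t0 ht0] := traj_stab rs.
apply: contrapT => hno.
have hle : forall t, (t0 <= t)%N -> eng (traj rs t) (rs t) <= c.
  move=> t ht; rewrite leNgt; apply/negP => hlt; apply: hno.
  have hst : traj rs t.+1 = traj rs t by rewrite ht0 ?ht0 //; apply: leqW.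
  have [hq1 hq2] := @q_of_rs_valid rs t hv hst.
  by eexists; split; [exact: hq1|rewrite hq2].
have := @cesaro_le R (fun t => eng (traj rs t) (rs t)) t0 c v hle hcv.
by rewrite leNgt hc.
Qed.

Lemma fl_char c : c < LTE_FL K abar ebar ut ct <->
  ((c < 0 /\ forall q, ~ valid_seq (rsq q)) \/
   exists q, valid_seq (rsq q) /\ c < LTE (rsq q)).
Proof.
rewrite /LTE_FL -/ach.
have hub : has_ubound ach by exists Bnd => v; exact: ach_le_B.
case: (pselect (exists q, valid_seq (rsq q))) => [[q0 hq0]|hno].
  have hne : ach !=set0 by exists (LTE (rsq q0)); apply: ach_of_q.
  rewrite -ach_char; split.
    by move=> h; right; have [y hy hcy] := sup_gt hne h; exists y.
  case => [[_ /(_ q0)] //|[v [hv hcv]]].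
  by apply: (lt_le_trans hcv); apply: ub_le_sup.
have -> : ach = set0.
  apply/seteqP; split => // v hv; apply: hno.
  have [q [hq _]] : exists q, valid_seq (rsq q) /\ v - 1 < LTE (rsq q).
    by apply/ach_char; exists v; split => //; rewrite ltrBlDr ltrDl.
  by exists q.
rewrite sup0; split.
  by move=> h; left; split => // q hq; apply: hno; exists q.
by case => [[]//|[q [hq _]]]; exfalso; apply: hno; exists q.
Qed.

End Det.

Lemma ext_card (T : finType) (A B : {set T}) n : A \subset B ->
  (#|A| <= n)%N -> (n <= #|B|)%N ->
  exists S : {set T}, [/\ A \subset S, S \subset B & #|S| = n].
Proof.
move=> hAB h1 h2.
have [k hk] : exists k, n = (#|A| + k)%N by exists (n - #|A|)%N; lia.
rewrite hk in h2 *; clear h1 hk.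
elim: k A hAB h2 => [|k IH] A hAB h2.
  by exists A; rewrite addn0 subxx.
have : ~~ (B \subset A).
  by apply/negP => /subset_leq_card hBA; lia.
case/fintype.subsetPn => x hxB hxA.
have hA' : x |: A \subset B by rewrite finset.subUset finset.sub1set hxB hAB.
have hc : #|x |: A| = (#|A|.+1)%N by rewrite cardsU1 hxA.
have [S [hS1 hS2 hS3]] := IH (x |: A) hA' (ltac:(rewrite hc; lia)).
exists S; split => //; last by rewrite hS3 hc; lia.
exact: fintype.subset_trans (finset.subsetUr _ _) hS1.
Qed.

Section UC.
Variables (R : realType) (D U C K abar : nat) (ebar : R).
Variables (ut : 'I_U -> D.-tuple R) (ct : 'I_C -> D.-tuple R).

Local Notation traj := (traj K abar ebar ut ct).
Local Notation step := (step K abar ebar ut ct).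
Local Notation eng := (engagement ut ct).
Local Notation valid_seq := (valid_seq K abar ebar ut ct).
Local Notation avg_eng := (avg_eng K abar ebar ut ct).
Local Notation LTE := (LTE K abar ebar ut ct).
Local Notation ach := (achievable_LTE K abar ebar ut ct).
Local Notation UC_seq := (UC_seq K abar ebar ut ct).
Local Notation uc_state := (uc_state K abar ebar ut ct).
Local Notation uc_recom := (uc_recom K ut ct).
Local Notation uc_opt := (uc_opt K ut ct).

Lemma uc_state_traj t : uc_state t = traj UC_seq t.
Proof. by elim: t => [//|t IH] /=; rewrite -IH. Qed.

Lemma uc_ev : exists t1, forall t, (t1 <= t)%N ->
  eng (traj UC_seq t) (UC_seq t) = eng (traj UC_seq t1) (UC_seq t1).
Proof.
have [t0 ht0] := @traj_stab _ _ _ _ K abar ebar ut ct UC_seq.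
apply: (@ev_const_eng R D U C K abar ebar ut ct UC_seq t0 (uc_recom (traj UC_seq t0))).
by move=> t ht; rewrite /Defs.UC_seq uc_state_traj ht0.
Qed.

Lemma uc_LTE : exists t1, avg_eng UC_seq @ \oo --> eng (traj UC_seq t1) (UC_seq t1)
  /\ LTE_UC K abar ebar ut ct = eng (traj UC_seq t1) (UC_seq t1).
Proof.
have [t1 h] := uc_ev.
by exists t1; apply: eng_const_LTE h.
Qed.

Lemma uc_zero : (0 < K)%N -> ~ K_creators_stay K abar ebar ut ct ->
  LTE_UC K abar ebar ut ct = 0.
Proof.
move=> hK hno.
have h2 : (uc_state 2).1 = finset.set0.
  apply/setP => i; rewrite [uc_state 2]/= inE finset.in_set0.
  apply/negbTE; rewrite negb_and; apply/orP; right; rewrite negb_and; apply/orP; left.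
  rewrite /Defs.uc_recom; case: pickP => [S /and3P [_ /eqP -> _]|_] /=.
    rewrite neq_ltn; apply/orP; left.
    move: hno; rewrite /K_creators_stay => /negP; rewrite -ltnNge => hlt.
    by rewrite (minn_idPr (ltnW hlt)).
  by rewrite cards0 eq_sym -lt0n.
have hz : forall t, (2 <= t)%N -> eng (traj UC_seq t) (UC_seq t) = 0.
  move=> t ht; have /andP [hs _] := @traj_mono _ _ _ _ K abar ebar ut ct UC_seq 2 t ht.
  rewrite -uc_state_traj h2 finset.subset0 in hs.
  by rewrite /engagement -uc_state_traj (eqP hs) big_set0.
by have [_ <-] := @eng_const_LTE R D U C K abar ebar ut ct UC_seq 2 0 hz.
Qed.

Section Good.
Hypothesis hd : forall i j, 0 <= dotp (ut i) (ct j).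

Lemma uc_opt_ex s i : exists S, uc_opt s i S.
Proof.
pose m := minn K #|s.2|.
pose P := fun S : {set 'I_C} => (S \subset s.2) && (#|S| == m).
pose F := fun S : {set 'I_C} => \sum_(j in S) dotp (ut i) (ct j).
have [S0 [_ hS0 hS0c]] := @ext_card _ finset.set0 s.2 m (finset.sub0set _) (ltac:(by rewrite cards0)) (geq_minr _ _).
have PS0 : P S0 by rewrite /P hS0 hS0c eqxx.
case: (@arg_maxP _ R _ S0 P F PS0) => S /andP [hS1 /eqP hS2] hmax.
exists S; rewrite /Defs.uc_opt hS1 hS2 eqxx /=.
apply/forallP => S'; apply/implyP => /andP [h1 h2].
have hm : (#|S'| <= m)%N by rewrite leq_min h2 subset_leq_card.
have [S'' [h3 h4 h5]] := @ext_card _ S' s.2 m h1 hm (geq_minr _ _).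
apply: (@le_trans _ _ (F S'')).
  by apply: sum_sub_le.
by apply: hmax; rewrite /P h4 h5 eqxx.
Qed.

Lemma uc_recom_opt s i : uc_opt s i (uc_recom s i).
Proof.
rewrite /Defs.uc_recom; case: pickP => [S hS //|hn].
by have [S hS] := uc_opt_ex s i; rewrite hn in hS.
Qed.

Lemma uc_valid : valid_seq UC_seq.
Proof.
move=> t i _; rewrite [UC_seq t]/Defs.UC_seq uc_state_traj.
by have /and3P [h1 /eqP h2 _] := uc_recom_opt (traj UC_seq t) i.
Qed.

Lemma eng_ge0 s r : 0 <= eng s r.
Proof. by apply: sumr_ge0 => i _; apply: sumr_ge0 => j _. Qed.

Lemma uc_ge0 : 0 <= LTE_UC K abar ebar ut ct.
Proof. by have [t1 [_ ->]] := uc_LTE; apply: eng_ge0. Qed.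

Lemma uc_le_fl : LTE_UC K abar ebar ut ct <= LTE_FL K abar ebar ut ct.
Proof.
have hub : has_ubound ach by exists (@Bnd _ _ _ _ ut ct) => v; exact: ach_le_B.
apply: ub_le_sup => //.
have [t1 [h1 h2]] := uc_LTE.
by rewrite h2; exists UC_seq; split; [exact: uc_valid|exact: h1].
Qed.

End Good.
End UC.

Section FMeas.
Context {d : measure_display} {Omega : measurableType d}.

Lemma meas_ex (T : finType) (S : T -> set Omega) :
  (forall x, measurable (S x)) -> measurable [set w | exists x, S x w].
Proof.
move=> hS.
have H : forall s : seq T, measurable [set w | exists x, x \in s /\ S x w].
  elim => [|x s IH].
    by rewrite (_ : [set w | _] = set0) //; apply/seteqP; split => w // [y []].
  rewrite (_ : [set w | _] = S x `|` [set w | exists y, y \in s /\ S y w]).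
    exact: measurableU.
  apply/seteqP; split => w /=.
    move=> [y []]; rewrite in_cons => /orP [/eqP -> h|hy h]; first by left.
    by right; exists y.
  case => [h|[y [hy h]]]; first by exists x; rewrite in_cons eqxx.
  by exists y; rewrite in_cons hy orbT.
rewrite (_ : [set w | _] = [set w | exists x, x \in index_enum T /\ S x w]) //.
apply/seteqP; split => w /= [x h]; exists x => //.
  by rewrite mem_index_enum.
by case: h.
Qed.

Lemma meas_all (T : finType) (S : T -> set Omega) :
  (forall x, measurable (S x)) -> measurable [set w | forall x, S x w].
Proof.
move=> hS.
rewrite (_ : [set w | _] = ~` [set w | exists x, (~` S x) w]).
  by apply: measurableC; apply: meas_ex => x; apply: measurableC.
apply/seteqP; split => w /=.
  by move=> h [x hx]; apply: hx.
by move=> h x; apply: contrapT => hx; apply: h; exists x.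
Qed.

Definition fmeas (T : finType) (phi : Omega -> T) :=
  forall x, measurable (phi @^-1` [set x]).
Arguments fmeas {T} phi.

Lemma fmeas_pre (T : finType) (phi : Omega -> T) : fmeas phi ->
  forall A : set T, measurable (phi @^-1` A).
Proof.
move=> hp A.
rewrite (_ : phi @^-1` A = [set w | exists x, [set w | A x /\ phi w = x] w]).
  apply: meas_ex => x; case: (pselect (A x)) => hx.
    rewrite (_ : [set w | _] = phi @^-1` [set x]); first exact: hp.
    by apply/seteqP; split => w /=; [case|move=> h; split].
  rewrite (_ : [set w | _] = set0); first exact: measurable0.
  by apply/seteqP; split => w // [].
apply/seteqP; split => w /=.
  by move=> h; exists (phi w).
by move=> [x [hx hw]]; rewrite hw.
Qed.

Lemma fmeas_factor (T T' : finType) (b : Omega -> T) (phi : Omega -> T') :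
  fmeas b -> (forall w w', b w = b w' -> phi w = phi w') -> fmeas phi.
Proof.
move=> hb hf y.
rewrite (_ : phi @^-1` [set y] = b @^-1` [set x | exists w', b w' = x /\ phi w' = y]).
  exact: fmeas_pre.
apply/seteqP; split => w /=.
  by move=> h; exists w.
by move=> [w' [hw <-]]; apply: hf.
Qed.

Lemma meas_factor_set (T : finType) (b : Omega -> T) (S : set Omega) :
  fmeas b -> (forall w w', b w = b w' -> S w -> S w') -> measurable S.
Proof.
move=> hb hf.
rewrite (_ : S = b @^-1` [set x | exists w', b w' = x /\ S w']).
  exact: fmeas_pre.
apply/seteqP; split => w /=.
  by move=> h; exists w.
by move=> [w' [hw h]]; apply: (hf w'); rewrite ?hw.
Qed.

Lemma fmeas_pair (T T' : finType) (p1 : Omega -> T) (p2 : Omega -> T') :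
  fmeas p1 -> fmeas p2 -> fmeas (fun w => (p1 w, p2 w)).
Proof.
move=> h1 h2 [x y].
rewrite (_ : _ @^-1` _ = p1 @^-1` [set x] `&` p2 @^-1` [set y]).
  exact: measurableI.
by apply/seteqP; split => w /=; [case => -> ->|case => -> ->].
Qed.

Lemma fmeas_bool (b : Omega -> bool) : measurable [set w | b w] -> fmeas b.
Proof.
move=> h [].
  by rewrite (_ : _ @^-1` _ = [set w | b w]) //; apply/seteqP; split => w /=.
rewrite (_ : _ @^-1` _ = ~` [set w | b w]); first exact: measurableC.
by apply/seteqP; split => w /=; [move=> ->|move/negP/negbTE].
Qed.

Lemma fmeas_ffun (I T : finType) (phi : Omega -> I -> T) :
  (forall p, fmeas (fun w => phi w p)) -> fmeas (fun w => [ffun p => phi w p]).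
Proof.
move=> h f.
rewrite (_ : _ @^-1` _ = [set w | forall p, ((fun w => phi w p) @^-1` [set f p]) w]).
  by apply: meas_all => p; apply: h.
apply/seteqP; split => w /=.
  by move=> <- p; rewrite ffunE.
by move=> hp; apply/ffunP => p; rewrite ffunE hp.
Qed.

Variable R : realType.

Lemma meas_comp_f (T : finType) (phi : Omega -> T) (F : T -> Omega -> R) :
  fmeas phi -> (forall x, measurable_fun setT (F x)) ->
  measurable_fun setT (fun w => F (phi w) w).
Proof.
move=> hp hF _ Y hY; rewrite setTI.
rewrite (_ : _ @^-1` _ = [set w | exists x, (phi @^-1` [set x] `&` F x @^-1` Y) w]).
  apply: meas_ex => x; apply: measurableI => //.
  by have := hF x measurableT Y hY; rewrite setTI.
apply/seteqP; split => w /=.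
  by move=> h; exists (phi w).
by move=> [x [<-]].
Qed.

Lemma meas_sum_in (I : finType) (S : {pred I}) (f : I -> Omega -> R) :
  (forall j, measurable_fun setT (f j)) ->
  measurable_fun setT (fun w => \sum_(j in S) f j w).
Proof.
move=> hf.
rewrite (_ : (fun w => _) = (fun w => \sum_(j <- index_enum I) (if j \in S then f j w else 0))).
  apply: measurable_sum => j; case: (j \in S) => //; exact: measurable_cst.
by apply: funext => w; rewrite big_mkcond.
Qed.

End FMeas.
Arguments fmeas {d Omega T} phi.
Arguments meas_ex {d Omega T S}.
Arguments meas_all {d Omega T S}.
Arguments fmeas_pre {d Omega T phi}.
Arguments fmeas_factor {d Omega T T' b phi}.
Arguments meas_factor_set {d Omega T b S}.
Arguments fmeas_pair {d Omega T T' p1 p2}.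
Arguments fmeas_bool {d Omega b}.
Arguments fmeas_ffun {d Omega I T phi}.
Arguments meas_comp_f {d Omega R T phi F}.
Arguments meas_sum_in {d Omega R I S f}.

Section Dep.
Variables (R : realType) (D U C K abar : nat) (ebar : R).
Variables (ut ut' : 'I_U -> D.-tuple R) (ct ct' : 'I_C -> D.-tuple R).
Hypothesis hb : forall i j,
  (ebar <= dotp (ut i) (ct j)) = (ebar <= dotp (ut' i) (ct' j)).

Lemma step_dep s r : step K abar ebar ut ct s r = step K abar ebar ut' ct' s r.
Proof.
rewrite /step; congr (_, _); apply/setP => i; rewrite !inE.
congr (_ && (_ && _)); apply: eq_forallb => j; by rewrite hb.
Qed.

Lemma traj_dep rs t : traj K abar ebar ut ct rs t = traj K abar ebar ut' ct' rs t.
Proof. by elim: t => [//|t IH] /=; rewrite IH step_dep. Qed.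

Lemma valid_dep rs : valid_seq K abar ebar ut ct rs -> valid_seq K abar ebar ut' ct' rs.
Proof. by move=> h t; rewrite -traj_dep; apply: h. Qed.

Hypothesis hg : forall i (S S' : {set 'I_C}),
  (\sum_(j in S') dotp (ut i) (ct j) <= \sum_(j in S) dotp (ut i) (ct j)) =
  (\sum_(j in S') dotp (ut' i) (ct' j) <= \sum_(j in S) dotp (ut' i) (ct' j)).

Lemma uc_recom_dep s : uc_recom K ut ct s = uc_recom K ut' ct' s.
Proof.
apply: funext => i; rewrite /uc_recom; congr odflt; apply: eq_pick => S.
rewrite /uc_opt; congr (_ && (_ && _)); apply: eq_forallb => S'; by rewrite hg.
Qed.

Lemma uc_state_dep t : uc_state K abar ebar ut ct t = uc_state K abar ebar ut' ct' t.
Proof. by elim: t => [//|t IH] /=; rewrite IH uc_recom_dep step_dep. Qed.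

Lemma kstay_dep : K_creators_stay K abar ebar ut ct -> K_creators_stay K abar ebar ut' ct'.
Proof. by rewrite /K_creators_stay uc_recom_dep step_dep. Qed.

End Dep.
Arguments traj_dep {R D U C K abar ebar ut ut' ct ct'} hb rs t.
Arguments valid_dep {R D U C K abar ebar ut ut' ct ct'} hb rs _ t i _.
Arguments kstay_dep {R D U C K abar ebar ut ut' ct ct'} hb hg _.
Arguments uc_state_dep {R D U C K abar ebar ut ut' ct ct'} hb hg t.
Arguments uc_recom_dep {R D U C K ut ut' ct ct'} hg s.
Arguments rsq_LTE {R D U C} K abar ebar ut ct q.
Arguments uc_LTE {R D U C} K abar ebar ut ct.
Arguments uc_state_traj {R D U C} K abar ebar ut ct t.
Arguments fl_char {R D U C} K abar ebar ut ct c.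
Arguments uc_zero {R D U C} K abar ebar ut ct _ _.
Arguments uc_le_fl {R D U C} K abar ebar ut ct hd.
Arguments uc_ge0 {R D U C} K abar ebar ut ct hd.

Section Meas.
Variables (R : realType) (D U C K abar : nat) (ebar : R).
Variables (dO : measure_display) (Omega : measurableType dO).
Variables (us : 'I_U -> Omega -> D.-tuple R) (cs : 'I_C -> Omega -> D.-tuple R).
Hypothesis hus : forall i, measurable_fun setT (us i).
Hypothesis hcs : forall j, measurable_fun setT (cs j).

Local Notation utw w := (fun i => us i w).
Local Notation ctw w := (fun j => cs j w).

Lemma meas_le (f g : Omega -> R) : measurable_fun setT f -> measurable_fun setT g ->
  measurable [set w | f w <= g w].
Proof.
move=> hf hg.
have := measurable_fun_ler hf hg measurableT (Y := [set true]) (ltac:(by [])).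
by rewrite setTI preimage_true.
Qed.

Lemma meas_lt (f g : Omega -> R) : measurable_fun setT f -> measurable_fun setT g ->
  measurable [set w | f w < g w].
Proof.
move=> hf hg.
have := measurable_fun_ltr hf hg measurableT (Y := [set true]) (ltac:(by [])).
by rewrite setTI preimage_true.
Qed.

Lemma dot_meas i j : measurable_fun setT (fun w => dotp (us i w) (cs j w)).
Proof.
rewrite /dotp; apply: measurable_sum => k.
apply: measurable_funM.
  exact: (measurableT_comp (measurable_tnth k) (hus i)).
exact: (measurableT_comp (measurable_tnth k) (hcs j)).
Qed.

Definition betaw w : {ffun 'I_U * 'I_C -> bool} :=
  [ffun p : 'I_U * 'I_C => ebar <= dotp (us p.1 w) (cs p.2 w)].

Definition gammaw w : {ffun ('I_U * {set 'I_C}) * {set 'I_C} -> bool} :=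
  [ffun p : ('I_U * {set 'I_C}) * {set 'I_C} => \sum_(j in p.2) dotp (us p.1.1 w) (cs j w) <=
             \sum_(j in p.1.2) dotp (us p.1.1 w) (cs j w)].

Lemma beta_fmeas : fmeas betaw.
Proof.
apply: fmeas_ffun => p; apply: fmeas_bool.
by apply: meas_le; [exact: measurable_cst|exact: dot_meas].
Qed.

Lemma gamma_fmeas : fmeas gammaw.
Proof.
apply: fmeas_ffun => p; apply: fmeas_bool.
by apply: meas_le; apply: meas_sum_in => j; exact: dot_meas.
Qed.

Lemma bg_fmeas : fmeas (fun w => (betaw w, gammaw w)).
Proof. exact: fmeas_pair beta_fmeas gamma_fmeas. Qed.

Lemma beta_eq w w' : betaw w = betaw w' -> forall i j,
  (ebar <= dotp (us i w) (cs j w)) = (ebar <= dotp (us i w') (cs j w')).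
Proof. by move=> /ffunP h i j; have := h (i, j); rewrite !ffunE. Qed.

Lemma gamma_eq w w' : gammaw w = gammaw w' -> forall i (S S' : {set 'I_C}),
  (\sum_(j in S') dotp (us i w) (cs j w) <= \sum_(j in S) dotp (us i w) (cs j w)) =
  (\sum_(j in S') dotp (us i w') (cs j w') <= \sum_(j in S) dotp (us i w') (cs j w')).
Proof. by move=> /ffunP h i S S'; have := h ((i, S), S'); rewrite !ffunE. Qed.

Lemma traj_fmeas rs t : fmeas (fun w => traj K abar ebar (utw w) (ctw w) rs t).
Proof.
apply: (fmeas_factor beta_fmeas) => w w' h.
exact: (@traj_dep _ _ _ _ K abar ebar (utw w) (utw w') (ctw w) (ctw w') (beta_eq _ _ h) rs t).
Qed.

Lemma valid_meas rs : measurable [set w | valid_seq K abar ebar (utw w) (ctw w) rs].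
Proof.
apply: (meas_factor_set beta_fmeas) => w w' h.
exact: (@valid_dep _ _ _ _ K abar ebar (utw w) (utw w') (ctw w) (ctw w') (beta_eq _ _ h) rs).
Qed.

Lemma kstay_meas : measurable [set w | K_creators_stay K abar ebar (utw w) (ctw w)].
Proof.
apply: (meas_factor_set bg_fmeas) => w w' [h1 h2].
exact: (@kstay_dep _ _ _ _ K abar ebar (utw w) (utw w') (ctw w) (ctw w') (beta_eq _ _ h1) (gamma_eq _ _ h2)).
Qed.

Lemma eng_meas_s s r : measurable_fun setT (fun w => engagement (utw w) (ctw w) s r).
Proof.
rewrite /engagement.
apply: (meas_sum_in (f := fun i w => \sum_(j in r i) dotp (us i w) (cs j w))) => i.
by apply: meas_sum_in => j; exact: dot_meas.
Qed.

Lemma avg_meas (E : nat -> Omega -> R) T : (forall t, measurable_fun setT (E t)) ->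
  measurable_fun setT (fun w => T%:R^-1 * \sum_(t < T) E t w).
Proof.
move=> hE; apply: measurable_funM; first exact: measurable_cst.
exact: measurable_sum.
Qed.

Lemma LTEq_meas q : measurable_fun setT (fun w => LTE K abar ebar (utw w) (ctw w) (rsq q)).
Proof.
apply: (measurable_fun_cvg (h := fun T w => avg_eng K abar ebar (utw w) (ctw w) (rsq q) T)).
  move=> T; rewrite /avg_eng.
  apply: (avg_meas (fun t w => engagement (utw w) (ctw w) (traj K abar ebar (utw w) (ctw w) (rsq q) t) (rsq q t)) T) => t.
  exact: (meas_comp_f (traj_fmeas (rsq q) t) (F := fun s w => engagement (utw w) (ctw w) s (rsq q t)) (fun s => eng_meas_s s _)).
move=> w _; have [t1 [h1 h2]] := rsq_LTE K abar ebar (utw w) (ctw w) q.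
by rewrite h2.
Qed.

Lemma uc_meas : measurable_fun setT (fun w => LTE_UC K abar ebar (utw w) (ctw w)).
Proof.
apply: (measurable_fun_cvg (h := fun T w => avg_eng K abar ebar (utw w) (ctw w)
   (UC_seq K abar ebar (utw w) (ctw w)) T)); last first.
  move=> w _; have [t1 [h1 h2]] := uc_LTE K abar ebar (utw w) (ctw w).
  by rewrite h2.
move=> T; rewrite /avg_eng.
apply: (avg_meas (fun t w => engagement (utw w) (ctw w) (traj K abar ebar (utw w) (ctw w) (UC_seq K abar ebar (utw w) (ctw w)) t) (UC_seq K abar ebar (utw w) (ctw w) t)) T) => t.
pose phi w := (uc_state K abar ebar (utw w) (ctw w) t,
   [ffun i => uc_recom K (utw w) (ctw w) (uc_state K abar ebar (utw w) (ctw w) t) i]).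
have hphi : fmeas phi.
  apply: (fmeas_factor bg_fmeas) => w w' [h1 h2]; rewrite /phi.
  rewrite (@uc_state_dep _ _ _ _ K abar ebar (utw w) (utw w') (ctw w) (ctw w') (beta_eq _ _ h1) (gamma_eq _ _ h2)).
  by rewrite (@uc_recom_dep _ _ _ _ K (utw w) (utw w') (ctw w) (ctw w') (gamma_eq _ _ h2)).
have := meas_comp_f hphi (F := fun (x : state U C * {ffun 'I_U -> {set 'I_C}}) w => engagement (utw w) (ctw w) x.1 (fun i => x.2 i))
  (fun x => eng_meas_s x.1 _).
apply: eq_measurable_fun => w _ /=.
rewrite -uc_state_traj /engagement; apply: eq_bigr => i _.
by rewrite ffunE.
Qed.

End Meas.

Section Meas2.
Variables (R : realType) (D U C K abar : nat) (ebar : R).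
Variables (dO : measure_display) (Omega : measurableType dO).
Variables (us : 'I_U -> Omega -> D.-tuple R) (cs : 'I_C -> Omega -> D.-tuple R).
Hypothesis hus : forall i, measurable_fun setT (us i).
Hypothesis hcs : forall j, measurable_fun setT (cs j).

Local Notation utw w := (fun i => us i w).
Local Notation ctw w := (fun j => cs j w).
Local Notation fl w := (LTE_FL K abar ebar (utw w) (ctw w)).

Lemma fl_lt_meas c : measurable [set w | c < fl w].
Proof.
pose V q := [set w | valid_seq K abar ebar (utw w) (ctw w) (@rsq U C q)].
pose L q w := LTE K abar ebar (utw w) (ctw w) (@rsq U C q).
rewrite (_ : [set w | _] = ([set _ | c < 0] `&` ~` (\bigcup_q V q)) `|`
                            \bigcup_q (V q `&` [set w | c < L q w])).
  apply: measurableU; first apply: measurableI.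
  - have [hc|hc] := boolP (c < 0).
      rewrite (_ : [set _ : Omega | true] = setT); first exact: measurableT.
      by apply/seteqP; split => w //=.
    rewrite (_ : [set _ : Omega | false] = set0); first exact: measurable0.
    by apply/seteqP; split => w //=.
  - apply: measurableC; apply: countable_bigcupT_measurable; first exact: countableP.
    by move=> q; apply: valid_meas.
  - apply: countable_bigcupT_measurable; first exact: countableP.
    move=> q; apply: measurableI; first by apply: valid_meas.
    by apply: meas_lt; [exact: measurable_cst|exact: LTEq_meas].
apply/seteqP; split => w /=.
  move/(fl_char K abar ebar (utw w) (ctw w) c) => [[hc hno]|[q [hv hl]]].
    by left; split => // -[q _ hq]; exact: hno q hq.
  by right; exists q.
move=> h; apply/(fl_char K abar ebar (utw w) (ctw w) c).
case: h => [[hc hnb]|[q _ [hv hl]]].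
  by left; split => // q hq; apply: hnb; exists q.
by right; exists q.
Qed.

Lemma fl0_meas : measurable [set w | fl w = 0].
Proof.
rewrite (_ : [set w | _] = ~` [set w | 0 < fl w] `&`
                           \bigcap_n [set w | - (n.+1%:R^-1) < fl w]).
  apply: measurableI; first by apply: measurableC; apply: fl_lt_meas.
  by apply: bigcapT_measurable => n; apply: fl_lt_meas.
apply/seteqP; split => w /=.
  move=> h0; split; first by rewrite h0 ltxx.
  by move=> n _ /=; rewrite h0 oppr_lt0 invr_gt0 ltr0n.
move=> [h1 h2]; apply/eqP; rewrite eq_le leNgt; apply/andP; split.
  by apply/negP => h; apply: h1.
rewrite leNgt; apply/negP => /ltr_add_invr [k hk].
have := h2 k I; rewrite /= -subr_gt0 opprK => hk'.
by have := lt_trans hk' hk; rewrite ltxx.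
Qed.

End Meas2.

Lemma meas_from_lt {d} {Omega : measurableType d} (R : realType) (f : Omega -> R) :
  (forall c, measurable [set w | c < f w]) -> measurable_fun setT f.
Proof.
move=> h.
have e : (measurable : set (set R)) = <<s @RGenOInfty.G R >>.
  exact: RGenOInfty.measurableE.
have p : preimage_set_system setT f (@RGenOInfty.G R) `<=` measurable.
  move=> _ [_ [x ->] <-]; rewrite setTI preimage_itvoy.
  exact: h.
exact: (measurability (@RGenOInfty.G R) e p).
Qed.

Lemma inv_meas (R : realType) : measurable_fun setT (fun x : R => x^-1).
Proof.
apply: meas_from_lt => c.
pose h (x : R) := ((0 < x) && (c * x < 1)) || ((x < 0) && (1 < c * x)) || ((x == 0) && (c < 0)).
have mh : measurable_fun setT h.
  have mc : measurable_fun setT (fun x : R => c * x) by exact: mulrl_measurable.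
  have m0 : measurable_fun setT (fun _ : R => (0 : R)) by exact: measurable_cst.
  have m1 : measurable_fun setT (fun _ : R => (1 : R)) by exact: measurable_cst.
  have mi : measurable_fun setT (fun x : R => x) by exact: measurable_id.
  rewrite /h; apply: measurable_or; [apply: measurable_or|]; apply: measurable_and.
  - exact: measurable_fun_ltr m0 mi.
  - exact: measurable_fun_ltr mc m1.
  - exact: measurable_fun_ltr mi m0.
  - exact: measurable_fun_ltr m1 mc.
  - exact: measurable_fun_eqr mi m0.
  - exact: measurable_cst.
have E : forall x, (c < x^-1) = h x.
  move=> x; rewrite /h; case: (ltrgtP x 0) => hx /=.
  - by rewrite -[x^-1]div1r ltr_ndivlMr // ?andbF ?orbF.
  - by rewrite -[x^-1]div1r ltr_pdivlMr // ?orbF.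
  - by rewrite hx invr0.
have := mh measurableT [set true] (ltac:(by [])).
rewrite setTI preimage_true.
by rewrite (_ : [set` h] = [set x | c < x^-1]) //; apply/seteqP; split => x /=; rewrite E.
Qed.

Lemma bigcapI_mem (T : Type) (I : finType) (J : {set I}) (F : I -> set T) w :
  (\big[setI/setT]_(k in J) F k) w -> forall k, k \in J -> F k w.
Proof. by move=> h k hk; move: h; rewrite (bigD1 k) //= => -[]. Qed.
Arguments bigcapI_mem {T I J F w} _ k _.

Lemma bigcapI_meas {d} {T : measurableType d} (I : finType) (J : {set I}) (F : I -> set T) :
  (forall k, measurable (F k)) -> measurable (\big[setI/setT]_(k in J) F k).
Proof.
move=> h; apply: (big_ind (fun A => measurable A)).
- exact: measurableT.
- by move=> A B; apply: measurableI.
- by move=> k _; apply: h.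
Qed.

Theorem corollary3 (R : realType) (D U C K abar : nat) (ebar : R)
  (dO : measure_display) (Omega : measurableType dO) (P : probability Omega R)
  (DU DC : probability (D.-tuple R) R)
  (us : 'I_U -> Omega -> D.-tuple R) (cs : 'I_C -> Omega -> D.-tuple R) :
  (0 < K)%N -> 0 <= ebar <= 1 ->
  DU nonneg_unit = 1%E -> DC nonneg_unit = 1%E ->
  (forall i, measurable_fun setT (us i)) ->
  (forall j, measurable_fun setT (cs j)) ->
  (forall i A, measurable A -> P (us i @^-1` A) = DU A) ->
  (forall j A, measurable A -> P (cs j @^-1` A) = DC A) ->
  mutually_independent P
    (fun k : 'I_U + 'I_C => match k with inl i => us i | inr j => cs j end) ->
  (K <= C)%N -> (abar <= U)%N ->
  let fl := fun w => LTE_FL K abar ebar (fun i => us i w) (fun j => cs j w) in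
  let uc := fun w => LTE_UC K abar ebar (fun i => us i w) (fun j => cs j w) in
  let eps := fine (P [set w | fl w = 0]) in
  eps < 1 ->
  (cond_expectation P (fun w => (uc w / fl w)%R) [set w | (0 < fl w)%R]
   <= ((1 - eps)^-1)%:E
      * P [set w | K_creators_stay K abar ebar (fun i => us i w) (fun j => cs j w)])%E.
Proof.
move=> hK _ hDU hDC hus hcs hPU hPC hind _ _ fl uc eps heps.
have mNU : measurable (nonneg_unit : set (D.-tuple R)).
  rewrite /nonneg_unit.
  rewrite (_ : [set v | _] = [set v | forall k : 'I_D, [set v : D.-tuple R | 0 <= tnth v k] v] `&`
     ([set v | \sum_(k < D) tnth v k ^+ 2 <= 1] `&` [set v | 1 <= \sum_(k < D) tnth v k ^+ 2])).
    have hs : measurable_fun setT (fun v : D.-tuple R => \sum_(k < D) tnth v k ^+ 2).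
      apply: measurable_sum => k; apply: measurable_funX; exact: measurable_tnth.
    apply: measurableI.
      apply: meas_all => k; apply: meas_le; [exact: measurable_cst|exact: measurable_tnth].
    by apply: measurableI; apply: meas_le => //; exact: measurable_cst.
  apply/seteqP; split => v /=.
    by move=> [h1 h2]; split => //; rewrite h2; split.
  by move=> [h1 [h2 h3]]; split => //; apply/eqP; rewrite eq_le h2 h3.
have hG := hind finset.setT (fun _ => nonneg_unit) (fun _ => mNU).
set G := \big[setI/setT]_(_ in _) _ in hG.
have PG : P G = 1%E.
  rewrite hG; apply: big1 => -[i|j] _ /=; [by rewrite hPU|by rewrite hPC].
have mG : measurable G.
  apply: bigcapI_meas => -[i|j] /=.
    by have := hus i measurableT _ mNU; rewrite setTI.
  by have := hcs j measurableT _ mNU; rewrite setTI.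
have good : forall w, G w -> forall i j, 0 <= dotp (us i w) (cs j w).
  move=> w hw i j.
  have [hu _] := bigcapI_mem hw (inl i) (finset.in_setT _).
  have [hc _] := bigcapI_mem hw (inr j) (finset.in_setT _).
  by rewrite /dotp; apply: sumr_ge0 => k _; apply: mulr_ge0.
pose A := [set w | 0 < fl w].
pose S := [set w | K_creators_stay K abar ebar (fun i => us i w) (fun j => cs j w)].
have mA : measurable A := fl_lt_meas R D U C K abar ebar dO Omega us cs hus hcs 0.
have mA0 : measurable [set w | fl w = 0] := fl0_meas R D U C K abar ebar dO Omega us cs hus hcs.
have mS : measurable S := kstay_meas R D U C K abar ebar dO Omega us cs hus hcs.
have ucle : forall w, G w -> uc w <= fl w.
  move=> w hw; exact: (uc_le_fl K abar ebar (fun i => us i w) (fun j => cs j w) (good w hw)).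
have ucge0 : forall w, G w -> 0 <= uc w.
  move=> w hw; exact: (uc_ge0 K abar ebar (fun i => us i w) (fun j => cs j w) (good w hw)).
have flge0 : forall w, G w -> 0 <= fl w.
  by move=> w hw; exact: le_trans (ucge0 w hw) (ucle w hw).
have hAA0 : A `&` [set w | fl w = 0] = set0.
  by apply/seteqP; split => w // [/= h1 h2]; move: h1; rewrite /A /= h2 ltxx.
have mU : measurable (A `|` [set w | fl w = 0]) := measurableU _ _ mA mA0.
have hU : P (A `|` [set w | fl w = 0]) = 1%E.
  apply/le_anti/andP; split; first exact: probability_le1.
  rewrite -PG; apply: le_measure; rewrite ?inE //.
  move=> w hw; have := flge0 w hw; rewrite le_eqVlt => /orP [/eqP h|h].
    by right => /=; rewrite -h.
  by left.
have hsum : (P A + P [set w | fl w = 0%R] = 1)%E.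
  by rewrite -(measureU P mA mA0 hAA0).
have fA : P A = (fine (P A))%:E by rewrite fineK // fin_num_measure.
have fA0 : P [set w | fl w = 0] = eps%:E by rewrite /eps fineK // fin_num_measure.
have hPA : fine (P A) = 1 - eps.
  move: hsum; rewrite fA fA0 -EFinD => /eqP; rewrite eqe => /eqP h.
  by rewrite -h addrK.
pose f w := uc w / fl w * \1_A w.
have mfl : measurable_fun setT fl.
  by apply: meas_from_lt => c; exact: (fl_lt_meas R D U C K abar ebar dO Omega us cs hus hcs c).
have muc : measurable_fun setT uc := uc_meas R D U C K abar ebar dO Omega us cs hus hcs.
have mf : measurable_fun setT f.
  apply: measurable_funM; last exact: measurable_indic.
  apply: measurable_funM => //; exact: measurableT_comp (inv_meas R) mfl.
have hbound : forall w, G w -> 0 <= f w <= \1_S w.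
  move=> w hw; rewrite /f !indicE.
  have [hA|hA] := boolP (w \in A); last by rewrite mulr0 lexx /= ler0n.
  rewrite mulr1; have fpos : 0 < fl w by move: hA; rewrite in_setE.
  case: (pselect (S w)) => hS.
    rewrite mem_set //; apply/andP; split.
      by apply: divr_ge0 (ucge0 w hw) (ltW fpos).
    by rewrite ler_pdivrMr // mul1r; apply: ucle.
  have h0 : uc w = 0 by apply: (uc_zero K abar ebar (fun i => us i w) (fun j => cs j w) hK hS).
  by rewrite (memNset hS) h0 mul0r lexx.
have hE : ('E_P[f] <= P S)%E.
  rewrite -(expectation_indic P mS) unlock.
  pose g w := f w * \1_G w.
  have mg : measurable_fun setT g by apply: measurable_funM => //; exact: measurable_indic.
  have -> : (\int[P]_w (f w)%:E = \int[P]_w (g w)%:E)%E.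
    apply: ae_eq_integral => //.
    - by apply/measurable_EFinP.
    - by apply/measurable_EFinP.
    exists (~` G); split; first exact: measurableC.
      have hC := probability_setC P mG; rewrite PG subee // in hC; exact: hC.
    by move=> w /= h hw; apply: h => _; rewrite /g indicE mem_set // mulr1.
  apply: ge0_le_integral => //.
  - move=> w _; rewrite lee_fin /g indicE.
    have [hw|hw] := boolP (w \in G); last by rewrite mulr0.
    by rewrite mulr1; move: hw; rewrite in_setE => /hbound /andP [].
  - by apply/measurable_EFinP.
  - by apply/measurable_EFinP; exact: measurable_indic.
  - move=> w _; rewrite lee_fin /g [\1_G w]indicE.
    have [hw|hw] := boolP (w \in G); last by rewrite mulr0 indicE ler0n.
    by rewrite mulr1; move: hw; rewrite in_setE => /hbound /andP [].
rewrite /cond_expectation -/A hPA muleC.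
apply: lee_wpmul2l; last exact: hE.
by rewrite lee_fin invr_ge0 subr_ge0 ltW.
Qed.
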